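(* Let $M \ge 2$, $k_1,\dots,k_M$ positive integers, $\nu_1,\dots,\nu_M \in \mathbb{R}$, $x_{10},\dots,x_{M0} \in \mathbb{R}$, and $$0 < q_1 < p_1 < q_2 < p_2 < \cdots < q_M < p_M.$$ Let $\mathcal{M} = \{1,\dots,M\}$ and define $$P(z,\lambda) = \sum_{S \subseteq \mathcal{M}} C_S\lambda^{\nu_{S'}}z^{k_S},\qquad C_S = \Big(\prod_{(i,j)\in S\times S'} a_{ij}\Big)\Big(\prod_{j\in S'} b_j\Big),$$ where $S' = \mathcal{M}\setminus S$, $k_S = \sum_{i\in S}k_i$, $\nu_{S'} = \sum_{j\in S'}\nu_j$, and $$a_{ij} = \sqrt{\frac{(p_j-q_i)(q_j-p_i)}{(q_j-q_i)(p_j-p_i)}},\qquad b_j = \sqrt{\frac{q_j}{p_j}}\,e^{-ik_jx_{j0}}.$$ Then, provided $|\lambda| = 1$, all zeros of the polynomial $z \mapsto P(z,\lambda)$ lie in the open unit disk $\{z \in \mathbb{C} : |z| < 1\}$.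
   Context: For $|\lambda|=1$ and real exponents, powers of $\lambda$ are taken with a fixed argument: write $\lambda = e^{i\varphi}$ and set $\lambda^{\nu} = e^{i\nu\varphi}$, so that $\lambda^{\nu_{S'}} = \prod_{j\in S'}\lambda^{\nu_j}$. *)

(* Defs.v *)
From HB Require Import structures.
From mathcomp Require Import all_boot all_order all_algebra.
From mathcomp Require Import complex.
From mathcomp Require Import reals trigo.
Set Implicit Arguments. Unset Strict Implicit. Unset Printing Implicit Defensive.
Import Order.TTheory GRing.Theory Num.Theory.
Local Open Scope ring_scope.
Local Open Scope complex_scope.

Section Defs.
Variable R : realType.

Definition expi (t : R) : R[i] := (cos t) +i* (sin t).

(* lambda^nu for lambda = e^{i phi}, with fixed argument phi: e^{i nu phi} *)
Definition lam_pow (phi nu : R) : R[i] := expi (nu * phi).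

Variable M : nat.
Variables (k : 'I_M -> nat) (nu x0 p q : 'I_M -> R).

Definition a_coef (i j : 'I_M) : R :=
  Num.sqrt (((p j - q i) * (q j - p i)) / ((q j - q i) * (p j - p i))).

Definition b_coef (j : 'I_M) : R[i] :=
  (Num.sqrt (q j / p j))%:C * expi (- ((k j)%:R * x0 j)).

Definition C_coef (S : {set 'I_M}) : R[i] :=
  (\prod_(i in S) \prod_(j in ~: S) (a_coef i j)%:C) * \prod_(j in ~: S) b_coef j.

Definition k_sum (S : {set 'I_M}) : nat := (\sum_(i in S) k i)%N.

(* P(z, lambda) with lambda = e^{i phi};
   lambda^{nu_{S'}} = prod_{j in S'} lambda^{nu_j} *)
Definition Ppoly (phi : R) (z : R[i]) : R[i] :=
  \sum_(S : {set 'I_M}) C_coef S * (\prod_(j in ~: S) lam_pow phi (nu j)) * z ^+ k_sum S.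

End Defs.

(* Main.v *)
Require Import Defs.
From HB Require Import structures.
From mathcomp Require Import all_boot all_order all_algebra.
From mathcomp Require Import complex.
From mathcomp Require Import reals trigo.
From mathcomp Require Import ring lra.
Set Implicit Arguments. Unset Strict Implicit. Unset Printing Implicit Defensive.
Import Order.TTheory GRing.Theory Num.Theory.
Local Open Scope ring_scope.
Local Open Scope complex_scope.
Section C.
Variable R : realType.
Implicit Types (A B C D u v w c : R[i]).

Lemma AL A B C D :
  (forall u v, `|u| < 1 -> `|v| < 1 -> A + B * u + C * v + D * (u * v) != 0) ->
  forall w, `|w| < 1 -> A + D * w != 0.
Proof.
move=> H w hw; apply/negP => /eqP hA.
move/eqP: hA; rewrite addr_eq0 => /eqP hA.
have [D0|Dn0] := eqVneq D 0.
  move: (H 0 0); rewrite normr0 ltr01 => /(_ isT isT).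
  by rewrite hA D0 !mul0r !mulr0 !addr0 oppr0 eqxx.
pose b := (B + C) / D.
pose d := sqrtc (b ^+ 2 + 4%:R * w).
have hd : d ^+ 2 = b ^+ 2 + 4%:R * w by rewrite sqr_sqrtc.
have h2 : (2%:R : R[i]) != 0 by rewrite pnatr_eq0.
have hBC : B + C = b * D by rewrite /b mulfVK.
have root e : e ^+ 2 = d ^+ 2 -> A + B * ((e - b) / 2%:R) + C * ((e - b) / 2%:R) + D * ((e - b) / 2%:R * ((e - b) / 2%:R)) = 0.
  move=> he; set r := (e - b) / 2%:R.
  have hr : 2%:R * r = e - b by rewrite /r mulrC divfK.
  have -> : A + B * r + C * r + D * (r * r) = D * (r ^+ 2 + b * r - w).
    have hB : B = b * D - C by rewrite -hBC addrK.
    by rewrite hA hB; ring.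
  have : 4%:R * (r ^+ 2 + b * r - w) = 0.
    have -> : 4%:R * (r ^+ 2 + b * r - w) = (2%:R * r) ^+ 2 + b * 2%:R * (2%:R * r) - 4%:R * w by ring.
    rewrite hr.
    have -> : (e - b) ^+ 2 + b * 2%:R * (e - b) - 4%:R * w = e ^+ 2 - b ^+ 2 - 4%:R * w by ring.
    by rewrite he hd; ring.
  move/eqP; rewrite mulf_eq0 pnatr_eq0 /= => /eqP ->; by rewrite mulr0.
set r1 := (d - b) / 2%:R; set r2 := (- d - b) / 2%:R.
have hprod : r1 * r2 = - w.
  rewrite /r1 /r2; apply: (mulIf (mulf_neq0 h2 h2)).
  rewrite mulrACA !divfK // mulNr.
  have -> : (d - b) * (- d - b) = b ^+ 2 - d ^+ 2 by ring.
  by rewrite hd; ring.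
have [lt1|ge1] := boolP (`|r1| < 1).
  by move: (H r1 r1 lt1 lt1); rewrite root ?eqxx.
have [lt2|ge2] := boolP (`|r2| < 1).
  by move: (H r2 r2 lt2 lt2); rewrite root ?eqxx //; rewrite sqrrN.
have : 1 <= `|r1| * `|r2|.
  rewrite real_ltNge ?normr_real ?real1 // negbK in ge1.
  rewrite real_ltNge ?normr_real ?real1 // negbK in ge2.
  by rewrite -[1]mulr1 ler_pM.
by rewrite -normrM hprod normrN real_leNgt ?normr_real ?real1 // hw.
Qed.
End C.
Section C2.
Variable R : realType.
Implicit Types (A B C D u v w : R[i]) (c : R).

Lemma T_ne0 c u v : 0 <= c -> c < 1 -> `|u| < 1 -> `|v| < 1 ->
  1 + c%:C * u + c%:C * v + u * v != 0.
Proof.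
move=> c0 c1 hu hv.
have key : `|1 + c%:C * v| ^+ 2 - `|c%:C + v| ^+ 2 = (1 - c%:C ^+ 2) * (1 - `|v| ^+ 2).
  rewrite !sqr_normc !rmorphD !rmorphM /= !oppr0.
  change (c +i* 0) with c%:C; change (1 +i* 0) with (1 : R[i]); ring.
have hc2 : 0 < 1 - c%:C ^+ 2.
  by rewrite subr_gt0 -rmorphXn /= -(rmorph1 (real_complex R)) ltcR /= expr2 mulr_ilt1.
have hv2 : 0 < 1 - `|v| ^+ 2.
  by rewrite subr_gt0 expr2 mulr_ilt1.
have lt : `|c%:C + v| < `|1 + c%:C * v|.
  rewrite -(@ltr_pXn2r _ 2) ?nnegrE ?normr_ge0 // -subr_gt0 key; exact: mulr_gt0.
have : `|u * (c%:C + v)| < `|1 + c%:C * v|.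
  rewrite normrM; apply: le_lt_trans lt.
  by rewrite ler_piMl ?normr_ge0 // ltW.
apply: contraTneq => h.
have -> : u * (c%:C + v) = - (1 + c%:C * v).
  apply/eqP; rewrite -addr_eq0 -h; apply/eqP; ring.
by rewrite normrN ltxx.
Qed.

Lemma EL A B C D c : 0 <= c -> c < 1 ->
  (forall u v, `|u| < 1 -> `|v| < 1 -> A + B * u + C * v + D * (u * v) != 0) ->
  forall u v, `|u| < 1 -> `|v| < 1 -> A + c%:C * B * u + c%:C * C * v + D * (u * v) != 0.
Proof.
move=> c0 c1 H.
have step1 : forall u v1 v2, `|u| < 1 -> `|v1| < 1 -> `|v2| < 1 ->
    (A + C * v1) * (1 + c%:C * v2) + ((B + D * v1) * (c%:C + v2)) * u != 0.
  move=> u v1 v2 hu hv1 hv2.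
  apply: (@AL _ ((A + C * v1) * (1 + c%:C * v2)) ((B + D * v1) * (1 + c%:C * v2)) ((A + C * v1) * (c%:C + v2)) ((B + D * v1) * (c%:C + v2))) => // u1 u2 hu1 hu2.
  have -> : (A + C * v1) * (1 + c%:C * v2) + (B + D * v1) * (1 + c%:C * v2) * u1 +
     (A + C * v1) * (c%:C + v2) * u2 + (B + D * v1) * (c%:C + v2) * (u1 * u2) =
     (A + B * u1 + C * v1 + D * (u1 * v1)) * (1 + c%:C * u2 + c%:C * v2 + u2 * v2) by ring.
  by rewrite mulf_neq0 ?H ?T_ne0.
move=> u v hu hv.
have := @AL _ (A + c%:C * B * u) (C + c%:C * D * u) (c%:C * A + B * u) (c%:C * C + D * u).
have -> : A + c%:C * B * u + c%:C * C * v + D * (u * v) =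
   A + c%:C * B * u + (c%:C * C + D * u) * v by ring.
apply => // v1 v2 hv1 hv2.
have -> : A + c%:C * B * u + (C + c%:C * D * u) * v1 + (c%:C * A + B * u) * v2 +
   (c%:C * C + D * u) * (v1 * v2) =
   (A + C * v1) * (1 + c%:C * v2) + ((B + D * v1) * (c%:C + v2)) * u by ring.
exact: step1.
Qed.
End C2.
Section Sets.
Variable R : realType.
Variable I : finType.
Implicit Types (w : I -> I -> R[i]) (Y : I -> R[i]) (S A : {set I}).

Definition Wt w S : R[i] := \prod_(i in S) \prod_(j in ~: S) w i j.
Definition Qp w Y : R[i] := \sum_(S : {set I}) Wt w S * \prod_(j in ~: S) Y j.
Definition LYp (F : (I -> R[i]) -> R[i]) :=
  forall Y, (forall j, `|Y j| < 1) -> F Y != 0.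

Lemma prod_if1 A x (K : R[i]) :
  \prod_(j in A) (if j == x then K else 1) = if x \in A then K else 1.
Proof.
case: ifP => hx.
  rewrite (bigD1 x) //= eqxx big1 ?mulr1 // => j /andP [_ /negbTE ->] //.
by rewrite big1 // => j hj; case: eqP => // ej; rewrite -ej hj in hx.
Qed.

Lemma split2 A x y (F : I -> R[i]) : x != y ->
  \prod_(j in A) F j = (if x \in A then F x else 1) * (if y \in A then F y else 1) *
    \prod_(j in A) (if (j == x) || (j == y) then 1 else F j).
Proof.
move=> xy.
rewrite -!prod_if1 -!big_split /=; apply: eq_bigr => j _.
case: eqP => [->|jx]; first by rewrite (negbTE xy) /= !mulr1.
case: eqP => [->|jy] /=; by rewrite ?mulr1 ?mul1r.
Qed.

Lemma Qp_ext w w' Y : (forall i j, i != j -> w i j = w' i j) -> Qp w Y = Qp w' Y.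
Proof.
move=> h; apply: eq_bigr => S _; congr (_ * _); apply: eq_bigr => i hi.
apply: eq_bigr => j; rewrite in_setC => hj; apply: h.
by apply: contraNneq hj => <-.
Qed.

Lemma Qp_base : LYp (Qp (fun _ _ => 1)).
Proof.
move=> Y hY.
have -> : Qp (fun _ _ => 1) Y = \prod_j (1 + Y j).
  have e1 : forall j, 1 + Y j = \sum_(b : bool) (if b then 1 else Y j).
    by move=> j; rewrite big_bool.
  rewrite (eq_bigr _ (fun j _ => e1 j)) bigA_distr_bigA /=.
  rewrite (reindex (fun S : {set I} => [ffun x => x \in S])) /=; last first.
    exists (fun f : {ffun I -> bool} => [set x | f x]) => [S _|f _].
      by apply/setP => x; rewrite inE ffunE.
    by apply/ffunP => x; rewrite ffunE inE.
  apply: eq_bigr => S _.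
  rewrite /Wt big1 ?mul1r; last by move=> i _; rewrite big1.
  rewrite big_mkcond; apply: eq_bigr => j _; rewrite ffunE in_setC.
  by case: (j \in S).
rewrite prodf_seq_neq0; apply/allP => j _ /=.
apply/negP => /eqP h.
have : Y j = -1 by apply/eqP; rewrite -addr_eq0 addrC h.
by move=> e; move: (hY j); rewrite e normrN normr1 ltxx.
Qed.
End Sets.
Section Step.
Variable R : realType.
Variable I : finType.
Implicit Types (w : I -> I -> R[i]) (Y : I -> R[i]) (S A : {set I}).

Lemma prod_if2 S (x y : I) (K : R[i]) :
  \prod_(i in S) \prod_(j in ~: S) (if i == x then (if j == y then K else 1) else 1)
  = if x \in S then (if y \in ~: S then K else 1) else 1.
Proof.
rewrite -prod_if1; apply: eq_bigr => i _.
by case: (i == x); [exact: prod_if1 | exact: big1].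
Qed.

Lemma Wt_step w w' (x y : I) (c : R[i]) : x != y ->
  (forall i j, i != j -> w' i j = w i j * (if ((i == x) && (j == y)) || ((i == y) && (j == x)) then c else 1)) ->
  forall S, Wt w' S = Wt w S * ((if x \in S then (if y \in ~: S then c else 1) else 1) *
                               (if y \in S then (if x \in ~: S then c else 1) else 1)).
Proof.
move=> xy hw S.
rewrite -!prod_if2 /Wt -!big_split /=; apply: eq_bigr => i hi.
rewrite -!big_split /=; apply: eq_bigr => j; rewrite in_setC => hj.
rewrite hw; last by apply: contraNneq hj => <-.
congr (_ * _).
case: (eqVneq i x) => [ix|ix]; case: (eqVneq j y) => [jy|jy];
  case: (eqVneq i y) => [iy|iy]; case: (eqVneq j x) => [jx|jx] /=;
  rewrite ?mulr1 ?mul1r //.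
by move: xy; rewrite -ix iy eqxx.
Qed.
End Step.
Section Step2.
Variable R : realType.
Variable I : finType.
Implicit Types (w : I -> I -> R[i]) (Y : I -> R[i]) (S : {set I}).

Lemma Qp_step w w' (x y : I) (c : R) : x != y -> 0 <= c -> c < 1 ->
  (forall i j, i != j -> w' i j = w i j * (if ((i == x) && (j == y)) || ((i == y) && (j == x)) then c%:C else 1)) ->
  LYp (Qp w) -> LYp (Qp w').
Proof.
move=> xy c0 c1 hw H Y hY.
pose pi S := \prod_(j in ~: S) (if (j == x) || (j == y) then 1 else Y j).
pose A := \sum_(S : {set I} | (x \in S) && (y \in S)) Wt w S * pi S.
pose B := \sum_(S : {set I} | (x \notin S) && (y \in S)) Wt w S * pi S.
pose C := \sum_(S : {set I} | (x \in S) && (y \notin S)) Wt w S * pi S.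
pose D := \sum_(S : {set I} | (x \notin S) && (y \notin S)) Wt w S * pi S.
pose Yuv u v := fun j => if j == x then u else if j == y then v else Y j.
have yx : (y == x) = false by rewrite eq_sym (negbTE xy).
have dec : forall u v, Qp w (Yuv u v) = A + B * u + C * v + D * (u * v).
  move=> u v; rewrite /A /B /C /D (big_mkcond (fun S : {set I} => (x \in S) && (y \in S)))
    (big_mkcond (fun S : {set I} => (x \notin S) && (y \in S)))
    (big_mkcond (fun S : {set I} => (x \in S) && (y \notin S)))
    (big_mkcond (fun S : {set I} => (x \notin S) && (y \notin S))) !mulr_suml -!big_split /=.
  apply: eq_bigr => S _; rewrite (split2 _ _ xy) /Yuv eqxx yx.
  have -> : \prod_(j in ~: S) (if (j == x) || (j == y) then 1
         else if j == x then u else if j == y then v else Y j) = pi S.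
    by apply: eq_bigr => j _; case: (j == x); case: (j == y).
  rewrite !in_setC.
  rewrite eqxx.
  by case: (x \in S); case: (y \in S); rewrite /= ?mul0r ?add0r ?addr0 ?mulr1 ?mul1r; ring.
have dec' : Qp w' Y = A + c%:C * B * Y x + c%:C * C * Y y + D * (Y x * Y y).
  rewrite /A /B /C /D (big_mkcond (fun S : {set I} => (x \in S) && (y \in S)))
    (big_mkcond (fun S : {set I} => (x \notin S) && (y \in S)))
    (big_mkcond (fun S : {set I} => (x \in S) && (y \notin S)))
    (big_mkcond (fun S : {set I} => (x \notin S) && (y \notin S))) !(mulr_suml, mulr_sumr) -!big_split /=.
  apply: eq_bigr => S _; rewrite (Wt_step xy hw) (split2 _ _ xy) -/(pi S) !in_setC.
  by case: (x \in S); case: (y \in S); rewrite /= ?mul0r ?mulr0 ?add0r ?addr0 ?mulr1 ?mul1r; ring.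
rewrite dec'; apply: (EL c0 c1) => // u v hu hv.
rewrite -dec; apply: H => j; rewrite /Yuv.
by case: (j == x) => //; case: (j == y).
Qed.
End Step2.
From mathcomp Require Import zify.
Section LY.
Variable R : realType.

Lemma idx_eq (M m i j : nat) : (i < M)%N -> (j < M)%N ->
  (maxn i j * M + minn i j)%N = m -> maxn i j = (m %/ M)%N /\ minn i j = (m %% M)%N.
Proof.
move=> hi hj <-.
have M0 : (0 < M)%N by apply: leq_ltn_trans hi.
have mM : (minn i j < M)%N by rewrite gtn_min hi.
by rewrite divnMDl // modnMDl divn_small // modn_small // addn0.
Qed.

Lemma LY_sym (M : nat) (a : 'I_M -> 'I_M -> R) :
  (forall i j, i != j -> a i j = a j i) ->
  (forall i j, i != j -> 0 <= a i j < 1) ->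
  LYp (Qp (fun i j => (a i j)%:C)).
Proof.
move=> asym abd.
pose idx (i j : 'I_M) := (maxn i j * M + minn i j)%N.
pose wm m := fun i j : 'I_M => if (idx i j < m)%N then (a i j)%:C else 1.
have main : forall m, LYp (Qp (wm m)).
  elim => [|m IH].
    move=> Y hY; rewrite (@Qp_ext _ _ _ (fun _ _ => 1)); first exact: Qp_base.
    by move=> i j _; rewrite /wm ltn0.
  set hi := (m %/ M)%N; set lo := (m %% M)%N.
  have [/andP [lh hM]|nlh] := boolP ((lo < hi) && (hi < M))%N.
    have loM : (lo < M)%N by apply: ltn_trans hM.
    pose x := Ordinal loM; pose y := Ordinal hM.
    have xy : x != y by apply/eqP => /(congr1 val) /= e; rewrite e ltnn in lh.
    have [a0 a1] := andP (abd x y xy).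
    apply: (@Qp_step _ _ (wm m) (wm m.+1) x y (a x y)) => // i j ij.
    have mdef : m = (hi * M + lo)%N by rewrite /hi /lo -divn_eq.
    have key : (idx i j == m) = ((i == x) && (j == y)) || ((i == y) && (j == x)).
      apply/idP/idP.
        move/eqP/(idx_eq (ltn_ord i) (ltn_ord j)) => [e1 e2].
        have ij' : ((i : nat) != (j : nat)) by [].
        rewrite -/hi -/lo in e1 e2.
        have ij'' : (i : nat) <> (j : nat) by apply/eqP.
        have : ((i : nat) = lo /\ (j : nat) = hi) \/ ((i : nat) = hi /\ (j : nat) = lo) by lia.
        by case=> [[h1 h2]|[h1 h2]]; apply/orP; [left|right]; apply/andP; split; apply/eqP; apply: val_inj.
      move=> /orP [/andP [/eqP -> /eqP ->]|/andP [/eqP -> /eqP ->]];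
        rewrite /idx /= mdef; apply/eqP; lia.
    rewrite /wm; case: (ltngtP (idx i j) m) => hc.
    - have : idx i j != m by rewrite neq_ltn hc.
      by rewrite key => /negbTE ->; rewrite ltnS (ltnW hc) mulr1.
    - have : idx i j != m by rewrite neq_ltn hc orbT.
      rewrite key => /negbTE ->; rewrite mulr1.
      by rewrite ltnS leqNgt hc.
    - move: (key); rewrite hc eqxx => /esym hk; rewrite hk ltnSn mul1r.
      by case/orP: hk => /andP [/eqP -> /eqP ->] //; rewrite asym // eq_sym.
  move=> Y hY; rewrite (@Qp_ext _ _ _ (wm m)); first exact: IH.
  move=> i j ij; rewrite /wm ltnS leq_eqVlt.
  have -> : (idx i j == m) = false; last by [].
  apply/negP => /eqP /(idx_eq (ltn_ord i) (ltn_ord j)) [e1 e2].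
  have ij' : ((i : nat) != (j : nat)) by [].
  rewrite -/hi -/lo in e1 e2; move: nlh; rewrite -e1 -e2.
  have ij'' : (i : nat) <> (j : nat) by apply/eqP.
  have := ltn_ord i; have := ltn_ord j; move=> h1 h2; case/nandP; rewrite -leqNgt => h3; lia.
move=> Y hY; rewrite (@Qp_ext _ _ _ (wm (M * M)%N)); first exact: main.
move=> i j _; rewrite /wm /idx.
have : (maxn i j * M + minn i j < M * M)%N.
  have := ltn_ord i; have := ltn_ord j; nia.
by move=> ->.
Qed.
End LY.
Section Main.
Variable R : realType.

Lemma norm_expi (t : R) : `|expi t| = 1.
Proof.
by rewrite normc_def /= cos2Dsin2 sqrtr1.
Qed.

Lemma norm_realc (x : R) : 0 <= x -> `|x%:C| = x%:C.
Proof. by move=> hx; rewrite ger0_norm // ler0c. Qed.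

Theorem theorem3_aux (M : nat) (hM : (2 <= M)%N)
  (k : 'I_M -> nat) (nu x0 p q : 'I_M -> R)
  (hk : forall i : 'I_M, (0 < k i)%N)
  (hq0 : forall i : 'I_M, 0 < q i)
  (hqp : forall i : 'I_M, q i < p i)
  (hpq : forall i j : 'I_M, (i < j)%N -> p i < q j)
  (lam : R[i]) (phi : R) (hlam : `|lam| = 1) (hphi : lam = expi phi)
  (z : R[i]) (hz : Ppoly k nu x0 p q phi z = 0) :
  `|z| < 1.
Proof.
rewrite real_ltNge ?normr_real ?real1 //; apply/negP => hz1.
have z0 : z != 0 by apply: contraTneq hz1 => ->; rewrite normr0 ler10.
pose c j := b_coef k x0 p q j * lam_pow phi (nu j).
pose Z j := z ^+ k j.
have Z0 : forall j, Z j != 0 by move=> j; rewrite expf_neq0.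
pose Y j := c j / Z j.
have hY : forall j, `|Y j| < 1.
  move=> j; rewrite /Y /c /b_coef /lam_pow normrM normrV ?unitfE ?Z0 //.
  rewrite !normrM !norm_expi !mulr1 norm_realc ?sqrtr_ge0 //.
  have hZ : 1 <= `|Z j| by rewrite /Z normrX exprn_ege1.
  have hs : (Num.sqrt (q j / p j))%:C < 1.
    rewrite -(rmorph1 (real_complex R)) ltcR /= -[X in _ < X](sqrtr1 R) ltr_sqrt ?ltr01 //.
    have p0 : 0 < p j by apply: lt_trans (hqp j).
    by rewrite ltr_pdivrMr // mul1r.
  apply: le_lt_trans hs.
  rewrite ler_pdivrMr ?(lt_le_trans ltr01) //.
  by rewrite ler_peMr // ler0c sqrtr_ge0.
pose a := fun i j : 'I_M => a_coef p q i j.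
have asym : forall i j, i != j -> a i j = a j i.
  move=> i j _; rewrite /a /a_coef; congr Num.sqrt.
  by congr (_ * (_)^-1); ring.
have abd : forall i j, i != j -> 0 <= a i j < 1.
  have lt_case : forall i j : 'I_M, (i < j)%N -> a i j < 1.
    move=> i j ij; rewrite /a /a_coef -(sqrtr1 R) ltr_sqrt ?ltr01 //.
    have h1 := hqp i; have h2 := hqp j; have h3 := hpq _ _ ij.
    have Dp : 0 < (q j - q i) * (p j - p i).
      by apply: mulr_gt0; rewrite subr_gt0; lra.
    rewrite ltr_pdivrMr // mul1r -subr_gt0.
    have -> : (q j - q i) * (p j - p i) - (p j - q i) * (q j - p i) = (p j - q j) * (p i - q i) by ring.
    by apply: mulr_gt0; rewrite subr_gt0.
  move=> i j ij; rewrite /a /a_coef sqrtr_ge0 /=.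
  case: (ltngtP i j) => h.
  - exact: lt_case.
  - by rewrite -/(a_coef p q i j) -/(a i j) asym // lt_case.
  - by move: ij; rewrite (val_inj h) eqxx.
have LY := LY_sym asym abd (hY).
move: hz; apply/eqP.
have -> : Ppoly k nu x0 p q phi z = (\prod_j Z j) * Qp (fun i j => (a i j)%:C) Y.
  rewrite /Ppoly /Qp mulr_sumr; apply: eq_bigr => S _.
  rewrite /C_coef.
  have -> : z ^+ k_sum k S = \prod_(i in S) Z i.
    by rewrite /k_sum (big_morph (fun n => z ^+ n) (exprD z) (expr0 z)).
  rewrite [\prod_(j < M) Z j](bigID (fun i => i \in S)) /=.
  have -> : \prod_(i | i \notin S) Z i = \prod_(i in ~: S) Z i.
    by apply: eq_bigl => i; rewrite in_setC.
  have -> : \prod_(j in ~: S) Y j = (\prod_(j in ~: S) b_coef k x0 p q j) *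
      (\prod_(j in ~: S) lam_pow phi (nu j)) / \prod_(j in ~: S) Z j.
    by rewrite /Y /c prodf_div big_split.
  rewrite /Wt.
  have : \prod_(j in ~: S) Z j != 0 by rewrite prodf_seq_neq0; apply/allP => j _; rewrite Z0 implybT.
  move: (\prod_(j in ~: S) Z j) => PZ PZ0.
  field.
  exact: PZ0.
by rewrite mulf_eq0 negb_or prodf_seq_neq0 LY andbT; apply/allP => j _; rewrite Z0 implybT.
Qed.
End Main.

Unset Implicit Arguments.
Theorem theorem3 (R : realType) (M : nat) (hM : (2 <= M)%N)
  (k : 'I_M -> nat) (nu x0 p q : 'I_M -> R)
  (hk : forall i : 'I_M, (0 < k i)%N)
  (hq0 : forall i : 'I_M, 0 < q i)
  (hqp : forall i : 'I_M, q i < p i)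
  (hpq : forall i j : 'I_M, (i < j)%N -> p i < q j)
  (lam : R[i]) (phi : R) (hlam : `|lam| = 1) (hphi : lam = expi phi)
  (z : R[i]) (hz : Ppoly k nu x0 p q phi z = 0) :
  `|z| < 1.
Proof. exact: (@theorem3_aux R M hM k nu x0 p q hk hq0 hqp hpq lam phi hlam hphi z hz). Qed.
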